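(* Let $G$ and $H$ be graphs with no isolated vertices. Then $$\gamma_{oir2}(G\times H)\leq \min\{\gamma_{oir2}(H)\,|V(G)|,\ \gamma_{oir2}(G)\,|V(H)|\}.$$
   Context: All graphs are finite and simple. For a graph $G$, a function $f:V(G)\to\mathcal{P}(\{1,2\})$ is an outer-independent 2-rainbow dominating function (OI2RD function) if every vertex $v$ with $f(v)=\emptyset$ satisfies $\bigcup_{u\in N(v)}f(u)=\{1,2\}$ and the set $\{v: f(v)=\emptyset\}$ is independent. The weight of $f$ is $\sum_{v}|f(v)|$ and $\gamma_{oir2}(G)$ is the minimum weight of an OI2RD function of $G$. The direct product $G\times H$ has vertex set $V(G)\times V(H)$, with $(x,y)(x',y')$ an edge iff $xx'\in E(G)$ and $yy'\in E(H)$. *)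

(* Defs.v *)
From mathcomp Require Import all_boot.
Set Implicit Arguments. Unset Strict Implicit. Unset Printing Implicit Defensive.

(* A finite simple graph: vertex set a finType V, adjacency a symmetric,
   irreflexive boolean relation e. Labels {1,2} are represented by 'I_2. *)
Definition simple_graph (V : finType) (e : rel V) : Prop :=
  symmetric e /\ irreflexive e.

Definition no_isolated (V : finType) (e : rel V) : Prop :=
  forall v : V, exists u : V, e v u.

Definition nbhd (V : finType) (e : rel V) (v : V) : {set V} := [set u | e v u].

Definition is_oi2rdf (V : finType) (e : rel V) (f : {ffun V -> {set 'I_2}}) : bool :=
  [forall v, (f v == set0) ==> (\bigcup_(u in nbhd e v) f u == [set: 'I_2])]
  && [forall v, forall w, ((f v == set0) && (f w == set0)) ==> ~~ e v w].

Definition weight (V : finType) (f : {ffun V -> {set 'I_2}}) : nat :=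
  \sum_(v : V) #|f v|.

(* minimum weight; the constant function {1,2} is always an OI2RD function of
   weight 2|V|, so the default value 2|V| does not affect the minimum. *)
Definition gamma_oir2 (V : finType) (e : rel V) : nat :=
  \big[minn/(2 * #|V|)]_(f : {ffun V -> {set 'I_2}} | is_oi2rdf e f) weight f.

Definition direct_prod (V W : finType) (e : rel V) (e' : rel W) : rel (V * W) :=
  fun x y => e x.1 y.1 && e' x.2 y.2.

(* Main.v *)
Require Import Defs.
From mathcomp Require Import all_boot.
Set Implicit Arguments. Unset Strict Implicit.

Lemma bigmin_le (I : finType) (P : pred I) (F : I -> nat) m i :
  P i -> \big[minn/m]_(j | P j) F j <= F i.
Proof.
move=> Pi; have := mem_index_enum i; rewrite unlock.
elim: (index_enum I) => //= j r IH; rewrite inE => /orP [/eqP <-|/IH h].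
  by rewrite Pi geq_minl.
by case: (P j) => //; apply: leq_trans (geq_minr _ _) h.
Qed.

Lemma gamma_le (T : finType) (e : rel T) f : is_oi2rdf e f -> gamma_oir2 e <= weight f.
Proof. by move=> Hf; rewrite /gamma_oir2; apply: bigmin_le. Qed.

Lemma gamma_le_def (T : finType) (e : rel T) : gamma_oir2 e <= 2 * #|T|.
Proof.
rewrite /gamma_oir2; elim/big_ind: _ => //.
  by move=> x y Hx _; apply: leq_trans (geq_minl _ _) Hx.
by move=> f _; rewrite /weight -sum1_card big_distrr /= leq_sum // => i _; rewrite muln1; apply: leq_trans (max_card _) _; rewrite card_ord.
Qed.

Lemma oi_H (V W : finType) (eG : rel V) (eH : rel W) f :
  no_isolated eG -> is_oi2rdf eH f ->
  is_oi2rdf (direct_prod eG eH) [ffun p => f p.2].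
Proof.
move=> nG /andP [/forallP H1 /forallP H2]; apply/andP; split.
- apply/forallP => -[x y] /=; rewrite ffunE /=; apply/implyP => Hy.
  have := implyP (H1 y) Hy; rewrite !eqEsubset !subsetT !andTb => /subsetP Hs.
  apply/subsetP => k /Hs /bigcupP [u]; rewrite inE => Hu Hk.
  have [x' Hx'] := nG x.
  apply/bigcupP; exists (x', u); first by rewrite inE /direct_prod /= Hx' Hu.
  by rewrite ffunE.
- apply/forallP => v; apply/forallP => w; rewrite !ffunE; apply/implyP => Hvw.
  have := implyP (forallP (H2 v.2) w.2) Hvw.
  by rewrite /direct_prod negb_and => ->; rewrite orbT.
Qed.

Lemma oi_G (V W : finType) (eG : rel V) (eH : rel W) f :
  no_isolated eH -> is_oi2rdf eG f ->
  is_oi2rdf (direct_prod eG eH) [ffun p => f p.1].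
Proof.
move=> nH /andP [/forallP H1 /forallP H2]; apply/andP; split.
- apply/forallP => -[x y] /=; rewrite ffunE /=; apply/implyP => Hy.
  have := implyP (H1 x) Hy; rewrite !eqEsubset !subsetT !andTb => /subsetP Hs.
  apply/subsetP => k /Hs /bigcupP [u]; rewrite inE => Hu Hk.
  have [y' Hy'] := nH y.
  apply/bigcupP; exists (u, y'); first by rewrite inE /direct_prod /= Hy' Hu.
  by rewrite ffunE.
- apply/forallP => v; apply/forallP => w; rewrite !ffunE; apply/implyP => Hvw.
  have := implyP (forallP (H2 v.1) w.1) Hvw.
  by rewrite /direct_prod negb_and => ->.
Qed.

Lemma weight_H (V W : finType) (f : {ffun W -> {set 'I_2}}) :
  weight [ffun p : V * W => f p.2] = weight f * #|V|.
Proof.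
rewrite /weight (eq_bigr (fun p : V * W => #|f p.2|)); last by move=> p _; rewrite ffunE.
rewrite -(pair_bigA _ (fun _ y => #|f y|)) /=.
by rewrite sum_nat_const mulnC.
Qed.

Lemma weight_G (V W : finType) (f : {ffun V -> {set 'I_2}}) :
  weight [ffun p : V * W => f p.1] = weight f * #|W|.
Proof.
rewrite /weight (eq_bigr (fun p : V * W => #|f p.1|)); last by move=> p _; rewrite ffunE.
rewrite -(pair_bigA _ (fun x _ => #|f x|)) /=.
under eq_bigr => x _ do rewrite sum_nat_const.
by rewrite big_distrl /=; apply: eq_bigr => x _; rewrite mulnC.
Qed.

Theorem theorem2 (V W : finType) (eG : rel V) (eH : rel W) :
  simple_graph eG -> simple_graph eH ->
  no_isolated eG -> no_isolated eH ->
  gamma_oir2 (direct_prod eG eH) <=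
    minn (gamma_oir2 eH * #|V|) (gamma_oir2 eG * #|W|).
Proof.
move=> _ _ nG nH; rewrite leq_min; apply/andP; split.
- rewrite {2}/gamma_oir2; elim/big_ind: _.
  + by rewrite -mulnA [_ * #|V|]mulnC -card_prod gamma_le_def.
  + by move=> x y Hx Hy; case: (leqP x y).
  + move=> f Hf; rewrite -(weight_H V); exact: (gamma_le (oi_H nG Hf)).
- rewrite {2}/gamma_oir2; elim/big_ind: _.
  + by rewrite -mulnA -card_prod gamma_le_def.
  + by move=> x y Hx Hy; case: (leqP x y).
  + move=> f Hf; rewrite -(@weight_G V W); exact: (gamma_le (oi_G nH Hf)).
Qed.
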